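(* Let $\Sigma$ be a finite set, $k>2$ an integer, and $n\ge 1$. For every sequence of sets $X_1,\ldots,X_n\subseteq\Sigma$, each of size $k$, with $|\Sigma|<(k-2)\log_2(n/3)$, there exist indices $1\le i<j\le n$ and sets $X_i',\ldots,X_j'$ such that for each $\ell\in\{i,\ldots,j\}$, $X_\ell'\subseteq X_\ell$ and $|X_\ell'|\ge 2$, and for each $a\in\Sigma$ the number of sets among $X_i',\ldots,X_j'$ that contain $a$ is even. *)

(* Defs.v *)
From mathcomp Require Export all_boot.
From Stdlib Require Export Reals.
Set Implicit Arguments. Unset Strict Implicit. Unset Printing Implicit Defensive.

Definition log2 (x : R) : R := (ln x / ln 2)%R.

(* Main.v *)
Require Import Defs.
Set Warnings "-notation-overridden".
From mathcomp Require Import zify.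
From Stdlib Require Import Lra Classical.
Set Implicit Arguments. Unset Strict Implicit. Unset Printing Implicit Defensive.
Section Hall.
Variables (L R : finType) (E : L -> R -> bool) (r0 : R).
Definition nb (A : {set L}) : {set R} := [set r | [exists x in A, E x r]].

Lemma nbU A1 A2 : nb (A1 :|: A2) = nb A1 :|: nb A2.
Proof.
apply/setP=> r; rewrite !inE; apply/existsP/orP.
  case=> x /andP[]; rewrite inE => /orP[xA|xA] Exr; [left|right]; apply/existsP; exists x; by rewrite xA.
case=> /existsP[x /andP[xA Exr]]; exists x; by rewrite inE xA ?orbT.
Qed.

Lemma nb_mem (A : {set L}) x r : x \in A -> E x r -> r \in nb A.
Proof. by move=> xA Exr; rewrite inE; apply/existsP; exists x; rewrite xA. Qed.

Lemma hall_gen m : forall (A : {set L}) (Bs : {set R}), #|A| < m ->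
  (forall A' : {set L}, A' \subset A -> #|A'| <= #|nb A' :&: Bs|) ->
  exists f : L -> R, {in A &, injective f} /\ {in A, forall x, E x (f x) && (f x \in Bs)}.
Proof.
elim: m => // m IH A Bs leAm hall.
case: (pickP [pred A' : {set L} | (A' \proper A) && (A' != set0) && (#|A'| == #|nb A' :&: Bs|)]).
- move=> A' /= /andP[/andP[pA' nA'] /eqP tA'].
  have sA' := proper_sub pA'.
  have [f1 [inj1 P1]] : exists f : L -> R, {in A' &, injective f} /\ {in A', forall x, E x (f x) && (f x \in Bs)}.
    apply: (IH A' Bs).
      by have := proper_card pA'; lia.
    by move=> A2 sA2; apply: hall; apply: subset_trans sA2 sA'.
  have [f2 [inj2 P2]] : exists f : L -> R, {in A :\: A' &, injective f} /\
     {in A :\: A', forall x, E x (f x) && (f x \in Bs :\: nb A')}.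
    apply: IH.
      have := cardsD A A'; rewrite (setIidPr sA').
      have : 0 < #|A'| by rewrite card_gt0.
      have := subset_leq_card sA'; lia.
    move=> A2 sA2.
    have dis : [disjoint A2 & A'].
      apply/pred0P=> x /=; apply/negP=> /andP[x2 x1].
      by have := subsetP sA2 x x2; rewrite inE x1.
    have sub : A2 :|: A' \subset A.
      by rewrite subUset sA' andbT; apply: subset_trans sA2 (subsetDl _ _).
    have := hall _ sub.
    rewrite cardsU (disjoint_setI0 dis) cards0 subn0 nbU.
    have -> : (nb A2 :|: nb A') :&: Bs = (nb A2 :&: (Bs :\: nb A')) :|: (nb A' :&: Bs).
      apply/setP=> r; rewrite !(in_setI, in_setU, in_setD); by case: (r \in nb A2); case: (r \in nb A'); case: (r \in Bs).
    rewrite cardsU -tA'; lia.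
  exists (fun x => if x \in A' then f1 x else f2 x); split.
    move=> x y xA yA /=.
    case xA': (x \in A'); case yA': (y \in A').
    + by apply: inj1.
    + move=> e; have := P1 x xA'; have : y \in A :\: A' by rewrite inE yA' yA.
      move=> /P2; rewrite e in_setD => /andP[_ /andP[H _]] /andP[E1 _].
      by rewrite (nb_mem xA' E1) in H.
    + move=> e; have := P1 y yA'; have : x \in A :\: A' by rewrite inE xA' xA.
      move=> /P2; rewrite e in_setD => /andP[_ /andP[H _]] /andP[E1 _].
      by rewrite (nb_mem yA' E1) in H.
    + by apply: inj2; rewrite inE ?xA' ?yA' ?xA ?yA.
  move=> x xA /=; case xA': (x \in A'); first exact: P1.
  have : x \in A :\: A' by rewrite inE xA' xA.
  by move=> /P2; rewrite in_setD => /andP[-> /andP[_ ->]].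
- move=> notight.
  case: (set_0Vmem A) => [-> | [x xA]].
    by exists (fun _ => r0); split => // y; rewrite inE.
  have : 1 <= #|nb [set x] :&: Bs| by rewrite -(cards1 x); apply: hall; rewrite sub1set.
  rewrite card_gt0 => /set0Pn [y]; rewrite !inE => /andP[/existsP[x' /andP[]]].
  rewrite inE => /eqP -> Exy yB.
  have [f2 [inj2 P2]] : exists f : L -> R, {in A :\ x &, injective f} /\
     {in A :\ x, forall z, E z (f z) && (f z \in Bs :\ y)}.
    apply: IH.
      by have := cardsD1 x A; rewrite xA; lia.
    move=> A2 sA2.
    case: (set_0Vmem A2) => [-> | [z zA2]]; first by rewrite cards0.
    have sA2A : A2 \subset A by apply: subset_trans sA2 (subsetDl _ _).
    have pA2 : A2 \proper A.
      rewrite properEneq sA2A andbT; apply/eqP => e.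
      by have := subsetP sA2 x; rewrite e => /(_ xA); rewrite !inE eqxx.
    have := notight A2; rewrite /= pA2 /=.
    have -> : (A2 != set0) by apply/set0Pn; exists z.
    move=> /= /negbT ne.
    have le := hall A2 sA2A.
    have : #|nb A2 :&: Bs| <= (#|nb A2 :&: (Bs :\ y)|).+1.
      have -> : nb A2 :&: Bs = (nb A2 :&: (Bs :\ y)) :|: (nb A2 :&: Bs :&: [set y]).
        apply/setP=> r; rewrite !(in_setI, in_setD1, in_setU, in_set1); by case: (r == y); case: (r \in nb A2); case: (r \in Bs).
      rewrite cardsU; apply: leq_trans (leq_subr _ _) _.
      have : #|nb A2 :&: Bs :&: [set y]| <= 1 by rewrite -(cards1 y); apply: subset_leq_card; apply: subsetIr.
      lia.
    move: ne; rewrite neq_ltn; lia.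
  exists (fun z => if z == x then y else f2 z); split.
    move=> z1 z2 z1A z2A /=.
    case: (eqVneq z1 x) => [->|n1]; case: (eqVneq z2 x) => [->|n2] //.
    + move=> e; have : z2 \in A :\ x by rewrite in_setD1 z2A andbT.
      by move/P2; rewrite -e !inE eqxx andbF.
    + move=> e; have : z1 \in A :\ x by rewrite in_setD1 z1A andbT.
      by move/P2; rewrite e !inE eqxx andbF.
    + by apply: inj2; rewrite in_setD1 ?z1A ?z2A andbT.
  move=> z zA /=; case: (eqVneq z x) => [->|n]; first by rewrite Exy yB.
  have : z \in A :\ x by rewrite in_setD1 zA andbT.
  by move/P2; rewrite !inE => /andP[-> /andP[_ ->]].
Qed.
End Hall.
Lemma card_pairs n m (S : {set 'I_n}) (g : 'I_n -> nat) :
  (forall l, g l <= m) ->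
  #|[set p : 'I_n * 'I_m | (p.1 \in S) && (p.2 < g p.1)]| = \sum_(l in S) g l.
Proof.
move=> hg.
rewrite -sum1_card.
rewrite (eq_bigl (fun p : 'I_n * 'I_m => (p.1 \in S) && (p.2 < g p.1))); last by move=> p; rewrite inE.
rewrite -(pair_big_dep (fun l => l \in S) (fun l (j : 'I_m) => j < g l) (fun _ _ => 1)) /=.
apply: eq_bigr => l _.
rewrite (eq_bigl (fun j : 'I_m => true && (j < g l))) //.
rewrite (big_ord_narrow_cond (hg l)) sum1_card card_ord //.
Qed.

Section Core.
Variables (Sigma : finType) (n : nat) (X : 'I_n -> {set Sigma}) (B : {set 'I_n}).
Definition occ c := [set l in B | c \in X l].
Definition shd c := 1 < #|occ c|.
Definition sh l := [set c in X l | shd c].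
Definition Od := [set c | shd c && odd #|occ c|].

Lemma core : (forall l, l \in B -> 3 <= #|sh l|) ->
  exists Y : 'I_n -> {set Sigma},
    (forall l, l \in B -> Y l \subset X l /\ 2 <= #|Y l|) /\
    (forall c, ~~ odd #|[set l in B | c \in Y l]|).
Proof.
move=> h3.
case: (set_0Vmem B) => [B0 | [l0 l0B]].
  exists (fun _ => set0); split => [l|c]; first by rewrite B0 inE.
  by rewrite B0 (_ : [set l in set0 | _] = set0) ?cards0 //; apply/setP=> l; rewrite !inE.
pose S := #|Sigma|.
have S0 : 0 < S.
  have := h3 l0 l0B; have := max_card (sh l0); rewrite /S; lia.
pose g (l : 'I_n) := #|sh l| - 2.
have gS : forall l, g l <= S by move=> l; rewrite /g /S; have := max_card (sh l); lia.
pose E (c : Sigma) (p : 'I_n * 'I_S) := c \in X p.1.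
pose Bs := [set p : 'I_n * 'I_S | (p.1 \in B) && (p.2 < g p.1)].
have r0 : ('I_n * 'I_S)%type := (l0, Ordinal S0).
have hc : forall A' : {set Sigma}, A' \subset Od -> #|A'| <= #|nb E A' :&: Bs|.
  move=> A' sA'.
  pose NL := [set l in B | [exists c in A', c \in X l]].
  have -> : nb E A' :&: Bs = [set p : 'I_n * 'I_S | (p.1 \in NL) && (p.2 < g p.1)].
    apply/setP=> p; rewrite !inE.
    case: (p.1 \in B); rewrite ?andbF ?andbT //=.
  rewrite card_pairs //.
  (* 3 #|A'| <= sum occ <= sum sh <= 3 sum g *)
  have h1 : 3 * #|A'| <= \sum_(c in A') #|occ c|.
    rewrite -sum1_card big_distrr /= leq_sum // => c cA.
    have := subsetP sA' c cA; rewrite inE /shd => /andP[H1 H2].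
    by rewrite muln1; move: H1 H2; case: #|occ c| => [|[|[|x]]] //.
  have h2 : \sum_(c in A') #|occ c| = \sum_(l in NL) #|[set c in A' | c \in X l]|.
    transitivity (\sum_(c in A') \sum_(l in B) (c \in X l : nat)).
      apply: eq_bigr => c _; rewrite -sum1_card [in RHS]big_mkcond /= [in LHS]big_mkcond /=.
      by apply: eq_bigr => l _; rewrite inE; case: (l \in B); case: (c \in X l).
    rewrite exchange_big /=.
    rewrite [in RHS]big_mkcond /= [in LHS]big_mkcond /=.
    apply: eq_bigr => l _.
    rewrite inE; case lB: (l \in B) => /=; last by [].
    rewrite -sum1_card [in RHS]big_mkcond /= [in LHS]big_mkcond /=.
    case: (boolP [exists c in A', c \in X l]) => [_|/existsPn ne].
      by apply: eq_bigr => c _; rewrite inE; case: (c \in A'); case: (c \in X l).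
    rewrite big1 // => c _; have := ne c; rewrite negb_and.
    by case: (c \in A') => //= /negbTE ->.
  have h3' : \sum_(l in NL) #|[set c in A' | c \in X l]| <= \sum_(l in NL) 3 * g l.
    apply: leq_sum => l; rewrite inE => /andP[lB _].
    have : #|[set c in A' | c \in X l]| <= #|sh l|.
      apply: subset_leq_card; apply/subsetP => c; rewrite !inE => /andP[cA ->] /=.
      by have := subsetP sA' c cA; rewrite inE => /andP[].
    have := h3 l lB; rewrite /g; lia.
  rewrite -big_distrr /= in h3'.
  have : 3 * #|A'| <= 3 * \sum_(l in NL) g l by rewrite (leq_trans h1) // h2.
  by rewrite leq_pmul2l.
have [f [finj fP]] := @hall_gen _ _ E r0 #|Od|.+1 Od Bs (ltnSn _) hc.
pose T l := [set c in Od | (f c).1 == l].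
exists (fun l => sh l :\: T l); split.
  move=> l lB; split.
    by apply/subsetP => c; rewrite !inE => /andP[_ /andP[]].
  have hT : #|T l| <= g l.
    have <- : #|f @: T l| = #|T l|.
      apply: card_in_imset => c1 c2 /setIdP[c1O _] /setIdP[c2O _].
      exact: finj.
    have -> : g l = \sum_(l' in [set l]) g l' by rewrite big_set1.
    rewrite -(@card_pairs _ S) //; apply: subset_leq_card; apply/subsetP => p /imsetP[c].
    move=> /setIdP[cO /eqP fl] ->.
    have := fP c cO; move=> /andP[_]; rewrite [f c \in Bs]inE => /andP[_ lt].
    by rewrite fl in lt; rewrite !inE fl eqxx lt.
  rewrite cardsD.
  have := subset_leq_card (subsetIr (sh l) (T l)).
  have := h3 l lB; rewrite /g in hT; lia.
move=> c.
case sc: (shd c); last first.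
  rewrite (_ : [set l in B | _] = set0) ?cards0 //.
  by apply/setP => l; rewrite !inE sc !andbF.
have oc : (c \in Od) = odd #|occ c| by rewrite inE sc.
case cO: (c \in Od); last first.
  rewrite (_ : [set l in B | _] = occ c).
    by move: cO; rewrite oc => ->.
  apply/setP => l; rewrite !inE sc -oc cO /=.
  by case: (l \in B); case: (c \in X l).
have := fP c cO; move=> /andP[Ecf]; rewrite [f c \in Bs]inE => /andP[fB _].
rewrite (_ : [set l in B | _] = occ c :\ (f c).1).
  have fo : (f c).1 \in occ c by rewrite inE fB.
  move: cO; rewrite oc (cardsD1 (f c).1 (occ c)) fo /= => ->.
  done.
apply/setP => l; rewrite !inE sc -oc cO /=.
by case: (l \in B); case: (c \in X l); case: (eqVneq l (f c).1) => //= ->; rewrite eqxx.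
Qed.
End Core.
Section Rec.
Variables (Sigma : finType) (n k : nat) (X : 'I_n -> {set Sigma}).
Hypothesis hk : 2 < k.
Hypothesis hX : forall l, #|X l| = k.

Definition blk a b := [set l : 'I_n | a <= l < b].
Definition U a b := \bigcup_(l in blk a b) X l.
Definition solin a b := exists i j : 'I_n, [/\ a <= i, i < j & j < b] /\
    exists Y : 'I_n -> {set Sigma},
      (forall l : 'I_n, i <= l <= j -> Y l \subset X l /\ 2 <= #|Y l|) /\
      (forall c : Sigma, ~~ odd #|[set l : 'I_n | (i <= l <= j) && (c \in Y l)]|).

Lemma solin_mono a b a' b' : a' <= a -> b <= b' -> solin a b -> solin a' b'.
Proof.
move=> h1 h2 [i [j [[ai ij jb] HY]]]; exists i, j; split => //; split; lia.
Qed.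

Lemma uniq_or_sol a b : a < b -> b <= n -> solin a b \/
  exists l : 'I_n, a <= l < b /\
    k - 2 <= #|X l :\: \bigcup_(l' in blk a b :\ l) X l'|.
Proof.
move=> ab bn.
pose B := blk a b.
case: (boolP [exists l in B, #|sh X B l| < 3]) => [/existsP[l /andP[lB hl]] | /existsPn all3].
  right; exists l; split; first by move: lB; rewrite inE.
  have sub : X l :\: sh X B l \subset X l :\: \bigcup_(l' in B :\ l) X l'.
    apply/subsetP => c; rewrite !inE => /andP[nsh cX]; rewrite cX andbT.
    move: nsh; rewrite cX /= /shd; apply: contra => /bigcupP[l' /setD1P[ne l'B] cl'].
    apply/card_gt1P; exists l, l'; split; try by apply/setIdP.
    by rewrite eq_sym.
  apply: leq_trans (subset_leq_card sub).
  rewrite cardsD hX.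
  have := subset_leq_card (subsetIr (X l) (sh X B l)); lia.
left.
have h3 : forall l, l \in B -> 3 <= #|sh X B l|.
  by move=> l lB; have := all3 l; rewrite lB /= -leqNgt.
have [Y [HY1 HY2]] := core h3.
have an : a < n by lia.
have [l1 [l2 [l1B l2B ne12]]] : exists l1 l2 : 'I_n, [/\ l1 \in B, l2 \in B & l1 != l2].
  have aB : Ordinal an \in B by rewrite inE /=; lia.
  have : 0 < #|sh X B (Ordinal an)| by have := h3 _ aB; lia.
  rewrite card_gt0 => /set0Pn[c]; rewrite inE => /andP[_].
  rewrite /shd => /card_gt1P[x [y [xo yo nxy]]].
  move: xo yo => /setIdP[xB _] /setIdP[yB _].
  by exists x, y.
have bn1 : b.-1 < n by lia.
have hb2 : a.+1 < b.
  move: l1B l2B ne12; rewrite !inE => /andP[h1 h1'] /andP[h2 h2'] ne.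
  have : (l1 : nat) != l2 by [].
  lia.
exists (Ordinal an), (Ordinal bn1); split; first by split => /=; lia.
exists Y; split.
  move=> l /= hl; apply: HY1; rewrite inE; lia.
move=> c; have := HY2 c.
rewrite (_ : [set l : 'I_n | _ && _] = [set l in B | c \in Y l]) //.
apply/setP => l; rewrite !inE /=.
have -> : (a <= l <= b.-1) = (a <= l < b) by apply/idP/idP; lia.
by [].
Qed.

Lemma rec t : forall a b, a <= b -> b <= n -> ~ solin a b ->
  #|U a b| <= (k - 2) * t + (k - 1) -> (b - a).+1 <= expn 2 t.
Proof.
elim: t => [|t IH] a b ab bn nsol hU.
  case: (ltnP a b) => ab'; last by rewrite expn0; lia.
  have an : a < n by lia.
  have : X (Ordinal an) \subset U a b.
    by apply: bigcup_sup; rewrite inE /=; lia.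
  move/subset_leq_card; rewrite hX; lia.
case: (ltnP a b) => ab'; last by have := expn_gt0 2 t.+1; lia.
case: (uniq_or_sol ab' bn) => // [[l [hl hD]]].
set D := X l :\: _ in hD.
have DU : D \subset U a b.
  apply: subset_trans (subsetDl _ _) _; apply: bigcup_sup; rewrite inE; lia.
have sideU : forall a' b', a <= a' -> b' <= b -> (b' <= l \/ l < a') ->
    U a' b' \subset U a b :\: D.
  move=> a' b' h1 h2 h3; apply/subsetP => c /bigcupP[l' l'B cl'].
  move: l'B; rewrite inE => /andP[h4 h5].
  rewrite in_setD; apply/andP; split.
    apply/negP => /setDP[_ nc]; apply: (negP nc); apply/bigcupP; exists l' => //.
    rewrite !inE; apply/andP; split; last lia.
    apply/eqP => e; move: h3; rewrite -e; lia.
  by apply/bigcupP; exists l' => //; rewrite inE; lia.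
have cardside : forall a' b', a <= a' -> b' <= b -> (b' <= l \/ l < a') ->
    #|U a' b'| <= (k - 2) * t + (k - 1).
  move=> a' b' h1 h2 h3; have := subset_leq_card (sideU _ _ h1 h2 h3).
  rewrite cardsD (setIidPr DU) => hh; rewrite mulnS in hU; move: hh hD hU; generalize ((k - 2) * t) #|D| #|U a b| #|U a' b'|; lia.
have lb : l <= b by lia.
have al : a <= l by lia.
have al1 : a <= l.+1 by lia.
have lb1 : l.+1 <= b by lia.
have IH1 : (l - a).+1 <= expn 2 t.
  apply: IH => //; first by lia.
    by move=> s; apply: nsol; apply: solin_mono s.
  by apply: cardside => //; left.
have IH2 : (b - l.+1).+1 <= expn 2 t.
  apply: IH => //.
    by move=> s; apply: nsol; apply: solin_mono s.
  by apply: cardside => //; right.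
rewrite expnS; lia.
Qed.
End Rec.
Lemma expn_pow m e : expn m e = Nat.pow m e.
Proof. elim: e => [|e IH] //=; rewrite expnS IH; by []. Qed.

Lemma real_part (s k n : nat) : 2 < k -> 1 <= n ->
  (INR s < INR (k - 2) * log2 (INR n / 3))%R ->
  expn 3 (k - 2) * expn 2 s < expn n (k - 2).
Proof.
move=> hk hn hS.
have k2 : (0 < INR (k - 2))%R by apply: lt_0_INR; apply/ltP; lia.
have n0 : (0 < INR n)%R by apply: lt_0_INR; apply/ltP; lia.
have q0 : (0 < INR n / 3)%R by apply: Rdiv_lt_0_compat => //; lra.
have l2 : (0 < ln 2)%R by rewrite -ln_1; apply: ln_increasing; lra.
have s0 : (0 <= INR s)%R by apply: pos_INR.
have h1 : (INR s * ln 2 < INR (k - 2) * ln (INR n / 3))%R.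
  move: hS; rewrite /log2 => hS.
  have := Rmult_lt_compat_r (ln 2) _ _ l2 hS.
  rewrite Rmult_assoc /Rdiv Rmult_assoc Rinv_l; last by lra.
  by rewrite Rmult_1_r.
rewrite -ln_pow in h1; last lra.
rewrite -ln_pow in h1; last exact: q0.
have h2 := ln_lt_inv _ _ (pow_lt 2 s ltac:(lra)) (pow_lt _ (k - 2) q0) h1.
rewrite /Rdiv Rpow_mult_distr in h2.
have h3 : (INR 3 ^ (k - 2) * INR 2 ^ s < INR n ^ (k - 2))%R.
  have p3 : (0 < 3 ^ (k - 2))%R by apply: pow_lt; lra.
  have e : (INR 3 = 3)%R by rewrite /INR; lra.
  have e2 : (INR 2 = 2)%R by rewrite /INR; lra.
  rewrite e e2.
  have := Rmult_lt_compat_l _ _ _ p3 h2.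
  have -> : (3 ^ (k - 2) * (INR n ^ (k - 2) * (/ 3) ^ (k - 2)) = INR n ^ (k - 2))%R.
    rewrite Rmult_comm Rmult_assoc -Rpow_mult_distr Rinv_l; last lra.
    by rewrite pow1 Rmult_1_r.
  by [].
rewrite -!pow_INR -mult_INR in h3.
rewrite !expn_pow; apply/ltP; exact: INR_lt.
Qed.
Theorem lemma3 (Sigma : finType) (k n : nat) (hk : 2 < k) (hn : 1 <= n)
  (X : 'I_n -> {set Sigma})
  (hX : forall l, #|X l| = k)
  (hS : (INR #|Sigma| < INR (k - 2) * log2 (INR n / 3))%R) :
  exists (i j : 'I_n), i < j /\
    exists Y : 'I_n -> {set Sigma},
      (forall l : 'I_n, i <= l <= j -> Y l \subset X l /\ 2 <= #|Y l|) /\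
      (forall a : Sigma, ~~ odd #|[set l : 'I_n | (i <= l <= j) && (a \in Y l)]|).
Proof.
apply: NNPP => nconc.
have nsol : ~ solin X 0 n.
  by move=> [i [j [[_ ij _] HY]]]; apply: nconc; exists i, j; split.
pose s := #|Sigma|.
have k2 : 0 < k - 2 by lia.
pose t := s %/ (k - 2) + 1.
have hU : #|U X 0 n| <= (k - 2) * t + (k - 1).
  have := max_card (U X 0 n); have := ltn_ceil s k2.
  rewrite /t mulnDr muln1 mulnC -/s.
  move: (s %/ (k - 2) * (k - 2)) => q; lia.
have hr := rec hk hX (leq0n n) (leqnn n) nsol hU.
have R := real_part hk hn hS.
have h1 : expn n (k - 2) < expn (expn 2 t) (k - 2) by rewrite ltn_exp2r //; lia.
rewrite -expnM in h1.
have h2 : t * (k - 2) <= s + (k - 2).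
  rewrite /t mulnDl mul1n leq_add2r; exact: leq_divM.
have h3 : expn 2 (t * (k - 2)) <= expn 2 s * expn 3 (k - 2).
  apply: leq_trans (_ : expn 2 (s + (k - 2)) <= _).
    by rewrite leq_exp2l.
  by rewrite expnD leq_mul2l leq_exp2r // orbT.
rewrite -/s in R; move: R h1 h3; rewrite mulnC.
move: (expn n (k - 2)) (expn 2 (t * (k - 2))) (expn 2 s * expn 3 (k - 2)) => p q r; lia.
Qed.
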